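(* Let $n_1,\dots,n_r$ be positive integers, pairwise distinct ($n_j\ne n_l$ for $j\ne l$), and let $\mathcal R$ be a real Lie algebra of block diagonal matrices $\mathrm{diag}(A_1,\dots,A_r)$ with $A_j\in su(n_j)$ for each $j$. Assume weak subspace controllability: for every $j\in\{1,\dots,r\}$ and every $Z\in su(n_j)$ there is an element $\mathrm{diag}(A_1,\dots,A_r)\in\mathcal R$ with $A_j=Z$. Then $\mathcal R=\bigoplus_{j=1}^r su(n_j)$ (all block diagonal matrices with arbitrary blocks $A_j\in su(n_j)$). *)

(* Defs.v *)
From HB Require Import structures.
From mathcomp Require Import all_boot all_order all_algebra.
Set Implicit Arguments. Unset Strict Implicit. Unset Printing Implicit Defensive.
Import Order.TTheory GRing.Theory Num.Theory.
Local Open Scope ring_scope.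

(* Complex scalars: any numeric closed field C (e.g. the complex numbers);
   real scalars are the elements of Num.real. *)

Definition is_su (C : numClosedFieldType) (n : nat) (A : 'M[C]_n) : Prop :=
  (map_mx Num.conj A)^T = - A /\ \tr A = 0.

(* A block diagonal matrix diag(A_1,...,A_r), A_j of size n_j, is represented
   by its family of diagonal blocks. *)
Definition blockdiag (C : numClosedFieldType) (r : nat) (n : 'I_r -> nat) :=
  forall j : 'I_r, 'M[C]_(n j).

Definition bd_add (C : numClosedFieldType) (r : nat) (n : 'I_r -> nat) (A B : @blockdiag C r n) : blockdiag C n :=
  fun j => A j + B j.
Definition bd_scale (C : numClosedFieldType) (r : nat) (n : 'I_r -> nat) (a : C) (A : @blockdiag C r n) : blockdiag C n :=
  fun j => a *: A j.
Definition bd_zero (C : numClosedFieldType) (r : nat) (n : 'I_r -> nat) : @blockdiag C r n := fun j => 0.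
Definition bd_bracket (C : numClosedFieldType) (r : nat) (n : 'I_r -> nat) (A B : @blockdiag C r n) : blockdiag C n :=
  fun j => A j *m B j - B j *m A j.

Definition in_sum_su (C : numClosedFieldType) (r : nat) (n : 'I_r -> nat) (A : @blockdiag C r n) : Prop :=
  forall j, is_su (A j).

Definition real_lie_subalg (C : numClosedFieldType) (r : nat) (n : 'I_r -> nat) (L : @blockdiag C r n -> Prop) : Prop :=
  [/\ (forall A, L A -> in_sum_su A),
      L (bd_zero C n),
      (forall A B, L A -> L B -> L (bd_add A B)),
      (forall (a : C) A, a \is Num.real -> L A -> L (bd_scale a A)) &
      (forall A B, L A -> L B -> L (bd_bracket A B))].

Definition weak_subspace_controllable (C : numClosedFieldType) (r : nat) (n : 'I_r -> nat) (L : @blockdiag C r n -> Prop) : Prop :=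
  forall (j : 'I_r) (Z : 'M[C]_(n j)), is_su Z -> exists A, L A /\ A j = Z.

(* Main.v *)
Require Import Defs.
From mathcomp Require Import all_boot all_order all_algebra.
From mathcomp Require Import ring zify.
From Stdlib Require Import ClassicalEpsilon Classical FunctionalExtensionality.
Set Implicit Arguments. Unset Strict Implicit. Unset Printing Implicit Defensive.
Import Order.TTheory GRing.Theory Num.Theory.
Local Open Scope ring_scope.

Definition cadj (C : numClosedFieldType) m n (A : 'M[C]_(m, n)) := (map_mx Num.conj A)^T.

Lemma adjD (C : numClosedFieldType) m n (A B : 'M[C]_(m, n)) : cadj (A + B) = cadj A + cadj B.
Proof. by rewrite /cadj map_mxD linearD. Qed.

Lemma adjZ (C : numClosedFieldType) m n (a : C) (A : 'M[C]_(m, n)) : cadj (a *: A) = a^* *: cadj A.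
Proof. by rewrite /cadj map_mxZ linearZ. Qed.

Lemma adjN (C : numClosedFieldType) m n (A : 'M[C]_(m, n)) : cadj (- A) = - cadj A.
Proof. by rewrite /cadj map_mxN linearN. Qed.

Lemma adj0 (C : numClosedFieldType) m n : cadj (0 : 'M[C]_(m, n)) = 0.
Proof. by rewrite /cadj map_mx0 linear0. Qed.

Lemma adjE (C : numClosedFieldType) m n (A : 'M[C]_(m, n)) i j : cadj A i j = (A j i)^*.
Proof. by rewrite /cadj !mxE. Qed.

Lemma adjK (C : numClosedFieldType) m n (A : 'M[C]_(m, n)) : cadj (cadj A) = A.
Proof. by apply/matrixP => i j; rewrite !adjE conjCK. Qed.

Lemma adjM (C : numClosedFieldType) m n p (A : 'M[C]_(m, n)) (B : 'M[C]_(n, p)) :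
  cadj (A *m B) = cadj B *m cadj A.
Proof. by rewrite /cadj map_mxM trmx_mul. Qed.

Lemma adj_delta (C : numClosedFieldType) m n (i : 'I_m) (j : 'I_n) :
  cadj (delta_mx i j : 'M[C]_(m, n)) = delta_mx j i.
Proof. by apply/matrixP => x y; rewrite adjE !mxE conjC_nat andbC. Qed.

Lemma tr_adj (C : numClosedFieldType) m (A : 'M[C]_m) : \tr (cadj A) = (\tr A)^*.
Proof. by rewrite /cadj mxtrace_tr trace_map_mx. Qed.

Lemma su0 (C : numClosedFieldType) m : is_su (0 : 'M[C]_m).
Proof. by split; [rewrite -/(cadj 0) adj0 oppr0 | rewrite mxtrace0]. Qed.

Lemma suD (C : numClosedFieldType) m (a : C) (X Y : 'M[C]_m) :
  a \is Num.real -> is_su X -> is_su Y -> is_su (a *: X + Y).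
Proof.
move=> ar [hX tX] [hY tY]; split.
  by rewrite -/(cadj _) adjD adjZ (conj_Creal ar) /cadj hX hY scalerN opprD.
by rewrite mxtraceD mxtraceZ tX tY mulr0 addr0.
Qed.

Lemma suN (C : numClosedFieldType) m (X : 'M[C]_m) : is_su X -> is_su (- X).
Proof.
move=> h; have := suD (@rpredN1 _ _) h (su0 C m).
by rewrite addr0 scaleN1r.
Qed.

Lemma suS (C : numClosedFieldType) m (X Y : 'M[C]_m) : is_su X -> is_su Y -> is_su (X + Y).
Proof. by move=> hX hY; have := suD (@rpred1 _ _) hX hY; rewrite scale1r. Qed.

Lemma mulE_dl (C : numClosedFieldType) m n p (a : 'I_m) (b : 'I_n) (N : 'M[C]_(n, p)) i j :
  (delta_mx a b *m N) i j = (i == a)%:R * N b j.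
Proof.
rewrite mxE (bigD1 b) //= big1 ?addr0; first by rewrite mxE eqxx andbT.
by move=> k hk; rewrite mxE (negbTE hk) andbF mul0r.
Qed.

Lemma mulE_dr (C : numClosedFieldType) m n p (a : 'I_n) (b : 'I_p) (N : 'M[C]_(m, n)) i j :
  (N *m delta_mx a b) i j = N i a * (j == b)%:R.
Proof.
rewrite mxE (bigD1 a) //= big1 ?addr0; first by rewrite mxE eqxx.
by move=> k hk; rewrite mxE (negbTE hk) mulr0.
Qed.

Lemma tr_delta (C : numClosedFieldType) m (a b : 'I_m) :
  \tr (delta_mx a b : 'M[C]_m) = (a == b)%:R.
Proof.
rewrite /mxtrace (bigD1 a) //= big1 ?addr0; first by rewrite mxE eqxx.
by move=> k hk; rewrite mxE (negbTE hk).
Qed.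

Lemma suI (C : numClosedFieldType) m (X : 'M[C]_m) : cadj X = - X -> \tr X = 0 -> is_su X.
Proof. by split. Qed.
Lemma su_adj (C : numClosedFieldType) m (X : 'M[C]_m) : is_su X -> cadj X = - X.
Proof. by case. Qed.
Lemma su_tr (C : numClosedFieldType) m (X : 'M[C]_m) : is_su X -> \tr X = 0.
Proof. by case. Qed.

Definition br (C : numClosedFieldType) m (X Y : 'M[C]_m) := X *m Y - Y *m X.

Lemma brDl (C : numClosedFieldType) m (X Y N : 'M[C]_m) : br (X + Y) N = br X N + br Y N.
Proof. by rewrite /br mulmxDl mulmxDr opprD addrACA. Qed.
Lemma brDr (C : numClosedFieldType) m (X Y N : 'M[C]_m) : br N (X + Y) = br N X + br N Y.
Proof. by rewrite /br mulmxDl mulmxDr opprD addrACA. Qed.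
Lemma brZl (C : numClosedFieldType) m a (X N : 'M[C]_m) : br (a *: X) N = a *: br X N.
Proof. by rewrite /br -scalemxAl -scalemxAr scalerBr. Qed.
Lemma brZr (C : numClosedFieldType) m a (X N : 'M[C]_m) : br N (a *: X) = a *: br N X.
Proof. by rewrite /br -scalemxAl -scalemxAr scalerBr. Qed.
Lemma brC (C : numClosedFieldType) m (X N : 'M[C]_m) : br X N = - br N X.
Proof. by rewrite /br opprB. Qed.

Definition is_ideal (C : numClosedFieldType) m (I : 'M[C]_m -> Prop) :=
  [/\ forall X, I X -> is_su X, I 0,
     (forall a X Y, a \is Num.real -> I X -> I Y -> I (a *: X + Y)) &
     forall X W, I X -> is_su W -> I (br X W)].

Definition IC (C : numClosedFieldType) m (I : 'M[C]_m -> Prop) N :=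
  exists A B, [/\ I A, I B & N = A + 'i *: B].

Lemma hii (C : numClosedFieldType) : 'i * 'i = -1 :> C.
Proof. by rewrite -expr2 sqrCi. Qed.

Section IC.
Lemma IC0 (C : numClosedFieldType) m (I : 'M[C]_m -> Prop) : is_ideal I -> IC I 0.
Proof. by case=> _ h0 _ _; exists 0, 0; rewrite scaler0 addr0. Qed.

Lemma ICZD (C : numClosedFieldType) m (I : 'M[C]_m -> Prop) c N1 N2 :
  is_ideal I -> IC I N1 -> IC I N2 -> IC I (c *: N1 + N2).
Proof.
move=> [_ h0 hD _] [A1 [B1 [hA1 hB1 ->]]] [A2 [B2 [hA2 hB2 ->]]].
have hx := Creal_Re c; have hy := Creal_Im c.
have hny : - 'Im c \is Num.real by rewrite rpredN.
exists ('Re c *: A1 + ((- 'Im c) *: B1 + A2)), ('Im c *: A1 + ('Re c *: B1 + B2)).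
split; [by apply: (hD) => //; apply: (hD) | by apply: (hD) => //; apply: (hD) |].
apply/matrixP => i j; rewrite !mxE {1}(Crect c).
have := hii C => hi; ring: hi.
Qed.

Lemma ICD (C : numClosedFieldType) m (I : 'M[C]_m -> Prop) N1 N2 :
  is_ideal I -> IC I N1 -> IC I N2 -> IC I (N1 + N2).
Proof. by move=> hI h1 h2; have := ICZD 1 hI h1 h2; rewrite scale1r. Qed.

Lemma ICZ (C : numClosedFieldType) m (I : 'M[C]_m -> Prop) c N :
  is_ideal I -> IC I N -> IC I (c *: N).
Proof. by move=> hI h1; have := ICZD c hI h1 (IC0 hI); rewrite addr0. Qed.

Lemma ICbr_su (C : numClosedFieldType) m (I : 'M[C]_m -> Prop) S N :
  is_ideal I -> is_su S -> IC I N -> IC I (br S N).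
Proof.
move=> hI hS [A [B [hA hB ->]]]; case: (hI) => _ _ hD hbr.
exists (- br A S), (- br B S); split.
- by rewrite -scaleN1r -[X in I X]addr0; apply: (hD); rewrite ?rpredN1 //; [apply: (hbr) | case: hI].
- by rewrite -scaleN1r -[X in I X]addr0; apply: (hD); rewrite ?rpredN1 //; [apply: (hbr) | case: hI].
by rewrite brDr brZr (brC S A) (brC S B) scalerN.
Qed.

Lemma ICbr (C : numClosedFieldType) m (I : 'M[C]_m -> Prop) W N :
  is_ideal I -> \tr W = 0 -> IC I N -> IC I (br W N).
Proof.
move=> hI tW hN.
pose S1 := 2^-1 *: (W - cadj W).
pose S2 := (- 'i / 2) *: (W + cadj W).
have eW : W = S1 + 'i *: S2.
  apply/matrixP => i j; rewrite /S1 /S2 !mxE.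
  have hi := hii C; have h2 : (2 : C) != 0 by rewrite pnatr_eq0.
  field: hi => //.
have trA : \tr (cadj W) = 0 by rewrite tr_adj tW conjC0.
have s1 : is_su S1.
  apply: suI; last by rewrite mxtraceZ linearB /= trA tW subrr mulr0.
  rewrite /S1; apply/matrixP => i j; rewrite /cadj !mxE rmorphM rmorphB /= conjCK fmorphV rmorph_nat.
  ring.
have s2 : is_su S2.
  apply: suI; last by rewrite mxtraceZ mxtraceD trA tW addr0 mulr0.
  rewrite /S2; apply/matrixP => i j; rewrite /cadj !mxE rmorphM rmorphD /= conjCK rmorphM rmorphN /= fmorphV rmorph_nat conjCi.
  have hi := hii C; ring.
clearbody S1 S2; rewrite eW brDl brZl; apply: ICD => //; first exact: ICbr_su hI s1 hN.
by apply: ICZ => //; apply: ICbr_su hI s2 hN.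
Qed.
End IC.

Lemma eq_opp0 (F : numFieldType) (x : F) : x = - x -> x = 0.
Proof.
move=> h; have : x *+ 2 == 0 by rewrite mulr2n {2}h subrr.
by rewrite mulrn_eq0 /= => /eqP.
Qed.

Lemma sandwich (C : numClosedFieldType) m (p q r s : 'I_m) (X : 'M[C]_m) :
  delta_mx p q *m X *m delta_mx r s = X q r *: delta_mx p s.
Proof.
apply/matrixP => i j; rewrite mulE_dr mulE_dl !mxE.
by case: (i == p); case: (j == s); rewrite /= ?mulr0 ?mul0r ?mulr1 ?mul1r.
Qed.

Lemma tr_delta_neq (C : numClosedFieldType) m (a b : 'I_m) :
  a != b -> \tr (delta_mx a b : 'M[C]_m) = 0.
Proof. by move=> h; rewrite tr_delta (negbTE h). Qed.

Section Simple.

Lemma ideal_su (C : numClosedFieldType) m (I : 'M[C]_m -> Prop) X : is_ideal I -> I X -> is_su X.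
Proof. by case=> h *; apply: h. Qed.

Lemma IC_swap (C : numClosedFieldType) m (I : 'M[C]_m -> Prop) (a b : 'I_m) :
  is_ideal I -> a != b -> IC I (delta_mx a b) -> IC I (delta_mx b a).
Proof.
move=> hI hab h.
have hba : b != a by rewrite eq_sym.
have h1 := ICbr hI (tr_delta_neq C hba) h.
have h2 := ICbr hI (tr_delta_neq C hba) h1.
have e : br (delta_mx b a) (br (delta_mx b a) (delta_mx a b)) = (-2 : C) *: delta_mx b a.
  rewrite /br !mulmxBr !mulmxBl !mul_delta_mx_cond !eqxx !mulr1n !mul_delta_mx_cond !eqxx (negbTE hab) ?(negbTE hba).
  rewrite !mulr1n !mulr0n; apply/matrixP => i j; rewrite !mxE; ring.
rewrite e in h2; have := ICZ (-2)^-1 hI h2; rewrite scalerA mulVf ?scale1r //.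
by rewrite oppr_eq0 pnatr_eq0.
Qed.

Lemma IC_row (C : numClosedFieldType) m (I : 'M[C]_m -> Prop) (a b x : 'I_m) :
  is_ideal I -> a != b -> IC I (delta_mx a b) -> x != b -> IC I (delta_mx x b).
Proof.
move=> hI hab h hxb; have [->//|hxa] := eqVneq x a.
have := ICbr hI (tr_delta_neq C hxa) h.
rewrite /br !mul_delta_mx_cond eqxx [b == x]eq_sym (negbTE hxb) mulr1n mulr0n subr0 //.
Qed.

Lemma IC_col (C : numClosedFieldType) m (I : 'M[C]_m -> Prop) (a b y : 'I_m) :
  is_ideal I -> a != b -> IC I (delta_mx a b) -> y != a -> IC I (delta_mx a y).
Proof.
move=> hI hab h hya; have [->//|hyb] := eqVneq y b.
have hby : b != y by rewrite eq_sym.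
have := ICZ (-1) hI (ICbr hI (tr_delta_neq C hby) h).
rewrite /br !mul_delta_mx_cond eqxx (negbTE hya) mulr1n mulr0n sub0r scaleN1r opprK //.
Qed.

Lemma IC_all (C : numClosedFieldType) m (I : 'M[C]_m -> Prop) (a b x y : 'I_m) :
  is_ideal I -> a != b -> IC I (delta_mx a b) -> x != y -> IC I (delta_mx x y).
Proof.
move=> hI hab h hxy; have [exb|hxb] := eqVneq x b.
  have hba : b != a by rewrite eq_sym.
  rewrite exb; apply: (IC_col hI hba (IC_swap hI hab h)).
  by rewrite -exb eq_sym.
have h1 := IC_row hI hab h hxb.
apply: (IC_col hI hxb h1); by rewrite eq_sym.
Qed.

Lemma IC_diag (C : numClosedFieldType) m (I : 'M[C]_m.+1 -> Prop) (a b x : 'I_m.+1) :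
  is_ideal I -> a != b -> IC I (delta_mx a b) -> IC I (delta_mx x x - delta_mx 0 0).
Proof.
move=> hI hab h; have [->|hx0] := eqVneq x 0; first by rewrite subrr; exact: IC0.
have h0x : (0 : 'I_m.+1) != x by rewrite eq_sym.
have := ICbr hI (tr_delta_neq C hx0) (IC_all hI hab h h0x).
by rewrite /br !mul_delta_mx_cond !eqxx !mulr1n.
Qed.

Lemma IC_sl (C : numClosedFieldType) m (I : 'M[C]_m.+1 -> Prop) (a b : 'I_m.+1) M :
  is_ideal I -> a != b -> IC I (delta_mx a b) -> \tr M = 0 -> IC I M.
Proof.
move=> hI hab h trM.
pose F (i j : 'I_m.+1) : 'M[C]_m.+1 := delta_mx i j - (i == j)%:R *: delta_mx 0 0.
have eM : M = \sum_i \sum_j M i j *: F i j.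
  have -> : \sum_i \sum_j M i j *: F i j =
     \sum_i \sum_j M i j *: delta_mx i j - \sum_i \sum_j (M i j * (i == j)%:R) *: delta_mx 0 0.
    rewrite -sumrB; apply: eq_bigr => i _; rewrite -sumrB; apply: eq_bigr => j _.
    by rewrite /F scalerBr scalerA.
  have -> : \sum_i \sum_j (M i j * (i == j)%:R) *: (delta_mx 0 0 : 'M[C]_m.+1) = \tr M *: delta_mx 0 0.
    rewrite /mxtrace scaler_suml.
    apply: eq_bigr => i _; rewrite -scaler_suml; congr (_ *: _).
    rewrite (bigD1 i) //= eqxx mulr1 big1 ?addr0 // => j hj.
    by rewrite eq_sym (negbTE hj) mulr0.
  by rewrite trM scale0r subr0 -matrix_sum_delta.
rewrite eM; apply: (big_ind (IC I)); [exact: IC0 | by move=> *; apply: ICD |].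
move=> i _; apply: (big_ind (IC I)); [exact: IC0 | by move=> *; apply: ICD |].
move=> j _; apply: ICZ => //; rewrite /F.
have [<-|hij] := eqVneq i j; first by rewrite scale1r; exact: IC_diag hI hab h.
by rewrite scale0r subr0; exact: IC_all hI hab h hij.
Qed.

Lemma IC_start (C : numClosedFieldType) m (I : 'M[C]_m -> Prop) X :
  is_ideal I -> I X -> X != 0 -> exists a b, a != b /\ IC I (delta_mx a b).
Proof.
move=> hI hX nX.
have icX : IC I X by exists X, 0; split => //; [case: hI | rewrite scaler0 addr0].
case: (boolP [exists p, exists q, (p != q) && (X q p != 0)]).
  move=> /existsP [p /existsP [q /andP [hpq hX0]]].
  exists p, q; split => //.
  have hqp : q != p by rewrite eq_sym.
  have h2 := ICbr hI (tr_delta_neq C hpq) (ICbr hI (tr_delta_neq C hpq) icX).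
  have e : br (delta_mx p q) (br (delta_mx p q) X) = (-2 * X q p) *: delta_mx p q.
    rewrite /br !mulmxBr !mulmxBl !mulmxA !mul_delta_mx_cond (negbTE hqp) !mulr0n mul0mx.
    rewrite -!mulmxA !mul_delta_mx_cond (negbTE hqp) !mulr0n mulmx0 !mulmxA !sandwich.
    by apply/matrixP => i j; rewrite !mxE; ring.
  rewrite e in h2; have := ICZ (-2 * X q p)^-1 hI h2; rewrite scalerA mulVf ?scale1r //.
  by rewrite mulf_neq0 // oppr_eq0 pnatr_eq0.
rewrite negb_exists => /forallP hd.
have hdiag : forall p q, p != q -> X q p = 0.
  move=> p q hpq; have := hd p; rewrite negb_exists => /forallP /(_ q).
  by rewrite negb_and hpq /= negbK => /eqP.
have [a [b hab]] : exists a b, X a a != X b b.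
  case: m I X hI hX nX icX hd hdiag => [|m] I X hI hX nX icX hd hdiag.
    by case/eqP: nX; apply/matrixP => [[]].
  suff : [exists a, exists b, X a a != X b b] by move=> /existsP [a /existsP [b hb]]; exists a, b.
  apply: contraR nX => /existsPn hall.
  have e : forall a, X a a = X 0 0.
    by move=> a; have := hall a; move/existsPn/(_ 0); rewrite negbK => /eqP.
  have eX : X = (X 0 0)%:M.
    apply/matrixP => i j; rewrite !mxE; have [<-|hij] := eqVneq i j.
      by rewrite e mulr1n.
    by rewrite hdiag 1?eq_sym // mulr0n.
  have := su_tr (ideal_su hI hX); rewrite eX mxtrace_scalar => /eqP.
  rewrite mulrn_eq0 /= => /eqP h0; apply/eqP; rewrite eX h0.
  by apply/matrixP => i j; rewrite !mxE mul0rn.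
have hab' : a != b by apply: contraNneq hab => ->.
exists a, b; split => //.
have h2 := ICbr hI (tr_delta_neq C hab') icX.
have e : br (delta_mx a b) X = (X b b - X a a) *: delta_mx a b.
  apply/matrixP => i j; rewrite /br [LHS]mxE mulE_dl [X in _ + X]mxE mulE_dr !mxE.
  have [->|hia] := eqVneq i a; have [->|hjb] := eqVneq j b;
    rewrite /= ?mulr1 ?mul1r ?mulr0 ?mul0r ?subr0 ?sub0r //.
  - by rewrite hdiag // eq_sym.
  - by rewrite hdiag ?oppr0 // eq_sym.
rewrite e in h2; have := ICZ (X b b - X a a)^-1 hI h2; rewrite scalerA mulVf ?scale1r //.
by rewrite subr_eq0 eq_sym.
Qed.

Lemma su_simple (C : numClosedFieldType) m (I : 'M[C]_m -> Prop) X :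
  is_ideal I -> I X -> X != 0 -> forall Z, is_su Z -> I Z.
Proof.
move=> hI hX nX Z hZ.
have [a [b [hab h]]] := IC_start hI hX nX.
case: m I X Z a b hI hX nX hZ hab h => [|m] I X Z a b hI hX nX hZ hab h; first by have := ltn_ord a; rewrite ltn0.
have [A [B [hA hB eZ]]] := IC_sl hI hab h (su_tr hZ).
have sA := ideal_su hI hA; have sB := ideal_su hI hB.
have eB : 'i *: B = Z - A by rewrite eZ addrC addKr.
have h1 : cadj ('i *: B) = 'i *: B by rewrite adjZ conjCi su_adj // scalerN scaleNr opprK.
have h2 : cadj ('i *: B) = - ('i *: B).
  by rewrite eB adjD adjN !su_adj // opprK opprB addrC.
have e : 'i *: B = - ('i *: B) by rewrite -{1}h1 h2.
have e0 : 'i *: B = 0.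
  apply/matrixP => i j; move/matrixP/(_ i j): e; rewrite [X in _ = X]mxE => /eq_opp0 ->.
  by rewrite mxE.
by rewrite eZ e0 addr0.
Qed.

End Simple.

Lemma dep_family (C : fieldType) (T : finType) (N : nat) (Y : T -> 'M[C]_N) :
  (N * N < #|T|)%N -> exists u : T -> C, (exists t, u t != 0) /\ \sum_t u t *: Y t = 0.
Proof.
move=> hT.
pose R : 'M[C]_(#|T|, N*N) := \matrix_(i < #|T|) mxvec (Y (enum_val i)).
have nf : ~~ row_free R.
  by rewrite -row_leq_rank -ltnNge; apply: leq_ltn_trans (rank_leq_col R) hT.
rewrite -kermx_eq0 in nf.
have [i hi] : exists i, row i (kermx R) != 0.
  apply/existsP; apply: contraR nf; rewrite negb_exists => /forallP h.
  apply/eqP/row_matrixP => i; rewrite row0; exact/eqP/negbNE/h.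
set v := row i (kermx R) in hi.
have hv : v *m R = 0 by rewrite /v -row_mul mulmx_ker row0.
exists (fun t => v 0 (enum_rank t)); split.
  have [j hj] : exists j, v 0 j != 0.
    apply/existsP; apply: contraR hi; rewrite negb_exists => /forallP h.
    apply/eqP/rowP => j; move: (h j); rewrite negbK => /eqP ->; by rewrite mxE.
  by exists (enum_val j); rewrite enum_valK.
apply/eqP; rewrite -mxvec_eq0 raddf_sum /=.
move: hv; rewrite mulmx_sum_row => hv.
rewrite (reindex (@enum_val T (mem T))) /=; last first.
  by exists enum_rank => x _; [rewrite enum_valK | rewrite enum_rankK].
apply/eqP; rewrite -[RHS]hv; apply: eq_bigr => j _.
by rewrite enum_valK linearZ /= rowK.
Qed.

Lemma real_dep (C : numClosedFieldType) (T : finType) N (Y : T -> 'M[C]_N) (u : T -> C) :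
  (forall t, cadj (Y t) = - Y t) -> (exists t, u t != 0) -> \sum_t u t *: Y t = 0 ->
  exists c : T -> C, [/\ forall t, c t \is Num.real, exists t, c t != 0 & \sum_t c t *: Y t = 0].
Proof.
move=> hY [t0 ht0] hs.
have hc : \sum_t (u t)^* *: Y t = 0.
  apply/matrixP => i j; rewrite summxE mxE.
  move/matrixP/(_ j i): hs; rewrite summxE mxE => /(congr1 Num.conj).
  rewrite rmorph_sum rmorph0 /= => hh.
  suff -> : \sum_k ((u k)^* *: Y k) i j = - \sum_k ((u k *: Y k) j i)^* by rewrite hh oppr0.
  rewrite -sumrN; apply: eq_bigr => t _.
  move/matrixP/(_ i j): (hY t); rewrite adjE mxE => e.
  by rewrite !mxE rmorphM /= e mulrN opprK.
have hre : \sum_t 'Re (u t) *: Y t = 0.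
  have -> : \sum_t 'Re (u t) *: Y t = 2^-1 *: (\sum_t u t *: Y t + \sum_t (u t)^* *: Y t).
    rewrite -big_split scaler_sumr; apply: eq_bigr => t _.
    by rewrite ReE /= scalerDr !scalerA -scalerDl; congr (_ *: _); ring.
  by rewrite hs hc addr0 scaler0.
have him : \sum_t 'Im (u t) *: Y t = 0.
  have -> : \sum_t 'Im (u t) *: Y t = ('i / 2) *: (\sum_t (u t)^* *: Y t - \sum_t u t *: Y t).
    rewrite -sumrB scaler_sumr; apply: eq_bigr => t _.
    by rewrite ImE -scalerBl scalerA mulrAC.
  by rewrite hs hc subr0 scaler0.
have [hr|hr] := boolP [exists t, 'Re (u t) != 0].
  move/existsP: hr => [t ht]; exists (fun t => 'Re (u t)); split; [by move=> ?; exact: Creal_Re | by exists t | exact: hre].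
exists (fun t => 'Im (u t)); split; [by move=> ?; exact: Creal_Im | | exact: him].
exists t0; apply: contra ht0 => /eqP him0.
move: hr; rewrite negb_exists => /forallP/(_ t0); rewrite negbK => /eqP hre0.
by rewrite [u t0]Crect hre0 him0 mulr0 addr0.
Qed.

Definition Phi (C : numClosedFieldType) m (N : 'M[C]_m) : 'M[C]_m :=
  \matrix_(x, y) ((x < y)%N%:R * (N x y + 'i * N y x) + (y < x)%N%:R * (- N y x + 'i * N x y)).

Lemma PhiD (C : numClosedFieldType) m : {morph (@Phi C m) : A B / A + B >-> A + B}.
Proof. by move=> A B; apply/matrixP => x y; rewrite !mxE; ring. Qed.

Lemma Phi0 (C : numClosedFieldType) m : @Phi C m 0 = 0.
Proof. by apply/matrixP => x y; rewrite !mxE; ring. Qed.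

Lemma PhiZ (C : numClosedFieldType) m a (A : 'M[C]_m) : Phi (a *: A) = a *: Phi A.
Proof. by apply/matrixP => x y; rewrite !mxE; ring. Qed.

Lemma Phi_su (C : numClosedFieldType) m (N : 'M[C]_m) :
  (forall x y, N x y \is Num.real) -> is_su (Phi N).
Proof.
move=> hN; apply: suI.
  apply/matrixP => x y; rewrite adjE !mxE.
  rewrite !(rmorphD, rmorphM, rmorphN) /= !conjC_nat conjCi !conj_Creal //; ring.
rewrite /mxtrace big1 // => i _; by rewrite mxE ltnn; rewrite (_ : false%:R = 0) // !mul0r addr0.
Qed.

Lemma rect0 (C : numClosedFieldType) (x y : C) :
  x \is Num.real -> y \is Num.real -> x + 'i * y = 0 -> x = 0 /\ y = 0.
Proof.
move=> hx hy e; split.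
  by rewrite -(Re_rect hx hy) e ReE rmorph0 addr0 mul0r.
by rewrite -(Im_rect hx hy) e ImE rmorph0 subrr mulr0 mul0r.
Qed.

Lemma indep (C : numClosedFieldType) m' (c : 'I_m'.+1 * 'I_m' -> C) :
  (forall p, c p \is Num.real) ->
  \sum_p c p *: Phi (delta_mx p.1 (lift p.1 p.2) : 'M[C]_m'.+1) = 0 -> forall p, c p = 0.
Proof.
move=> hc hs [a k].
pose N := \sum_p c p *: (delta_mx p.1 (lift p.1 p.2) : 'M[C]_m'.+1).
have hPN : Phi N = 0.
  rewrite /N (big_morph _ (@PhiD C _) (@Phi0 C _)) -[RHS]hs.
  by apply: eq_bigr => p _; rewrite PhiZ.
have hNr : forall x y, N x y \is Num.real.
  move=> x y; rewrite /N summxE; apply: rpred_sum => p _.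
  by rewrite !mxE; apply: rpredM => //; exact: realn.
have hN0 : forall x y, x != y -> N x y = 0.
  move=> x y hxy; case: (ltngtP x y) => h.
  - move/matrixP/(_ x y): hPN; rewrite !mxE h [(y < x)%N]ltnNge (ltnW h) /=.
    rewrite mul1r mul0r addr0 => e.
    by case: (rect0 (hNr x y) (hNr y x) e).
  - move/matrixP/(_ y x): hPN; rewrite !mxE h [(x < y)%N]ltnNge (ltnW h) /=.
    rewrite mul1r mul0r addr0 => e.
    by case: (rect0 (hNr y x) (hNr x y) e).
  - by case/eqP: hxy; apply: val_inj.
have := hN0 a (lift a k) (neq_lift a k).
rewrite /N summxE (bigD1 (a, k)) //= big1 ?addr0.
  by rewrite !mxE !eqxx mulr1.
case=> a' k' hp; rewrite !mxE.
have [ea|na] := eqVneq a a'; last by rewrite andFb (_ : false%:R = 0 :> C) // mulr0.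
subst a'; have [ek|nk] := eqVneq (lift a k) (lift a k').
  by move: hp; rewrite (lift_inj ek) eqxx.
by rewrite /= (_ : false%:R = 0 :> C) // mulr0.
Qed.

Lemma no_inj (C : numClosedFieldType) m n (phi : 'M[C]_m -> 'M[C]_n) :
  (0 < n)%N -> (n < m)%N ->
  (forall X, is_su X -> is_su (phi X)) ->
  (forall a X Y, a \is Num.real -> is_su X -> is_su Y -> phi (a *: X + Y) = a *: phi X + phi Y) ->
  (forall X, is_su X -> phi X = 0 -> X = 0) -> False.
Proof.
case: m phi => [|m'] phi n0 nm hsu hlin hinj; first by [].
have phi0 : phi 0 = 0.
  have := hlin (-1) 0 0 (rpredN1 _) (su0 _ _) (su0 _ _).
  by rewrite scaler0 addr0 scaleN1r addrC subrr.
pose G (p : 'I_m'.+1 * 'I_m') : 'M[C]_m'.+1 := Phi (delta_mx p.1 (lift p.1 p.2)).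
have sG : forall p, is_su (G p).
  by move=> p; apply: Phi_su => x y; rewrite mxE; exact: realn.
pose Y p := phi (G p).
have card : (n * n < #|{: 'I_m'.+1 * 'I_m'}|)%N.
  rewrite card_prod !card_ord; nia.
have [u [hu hs]] := dep_family Y card.
have [c [hcr [t ht] hcs]] := real_dep (fun t => su_adj (hsu _ (sG t))) hu hs.
have [sS eS] : is_su (\sum_p c p *: G p) /\ phi (\sum_p c p *: G p) = \sum_p c p *: Y p.
  apply: (big_ind2 (fun X Y => is_su X /\ phi X = Y)).
  - by split; [exact: su0 | exact: phi0].
  - move=> X1 Y1 X2 Y2 [s1 e1] [s2 e2]; split; first exact: suS.
    by have := hlin 1 X1 X2 (rpred1 _) s1 s2; rewrite !scale1r e1 e2.
  - move=> p _; split; first by rewrite -[_ *: _]addr0; apply: suD => //; exact: su0.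
    have := hlin (c p) (G p) 0 (hcr p) (sG p) (su0 _ _).
    by rewrite !addr0 phi0 addr0.
have := hinj _ sS; rewrite eS hcs => /(_ erefl) h0.
by move/eqP: ht; apply; exact: (indep hcr h0 t).
Qed.

Definition V (C : numClosedFieldType) r (n : 'I_r -> nat) (L : blockdiag C n -> Prop)
  (j : 'I_r) (S : 'I_r -> Prop) (Z : 'M[C]_(n j)) :=
  exists A : blockdiag C n, [/\ L A, A j = Z & forall k, S k -> A k = 0].
Arguments V {C r n} L j S Z.

Lemma V_ideal (C : numClosedFieldType) r (n : 'I_r -> nat) (L : blockdiag C n -> Prop) j S :
  real_lie_subalg L -> weak_subspace_controllable L -> is_ideal (V L j S).
Proof.
move=> [hsu h0 hadd hsc hbr] hc; split.
- by move=> X [A [hA <- _]]; exact: hsu.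
- by exists (bd_zero C n).
- move=> a X Y ha [A [hA eA zA]] [B [hB eB zB]].
  exists (bd_add (bd_scale a A) B); split.
  + by apply: hadd => //; apply: hsc.
  + by rewrite /bd_add /bd_scale eA eB.
  + by move=> k hk; rewrite /bd_add /bd_scale zA // zB // scaler0 addr0.
- move=> X W [A [hA eA zA]] hW.
  have [B [hB eB]] := hc j W hW.
  exists (bd_bracket A B); split.
  + exact: hbr.
  + by rewrite /bd_bracket eA eB.
  + by move=> k hk; rewrite /bd_bracket zA // mul0mx mulmx0 subrr.
Qed.

Lemma graph_false (C : numClosedFieldType) r (n : 'I_r -> nat) (L : blockdiag C n -> Prop) j k :
  (forall j, (0 < n j)%N) -> real_lie_subalg L -> weak_subspace_controllable L ->
  (forall Z, V L j (fun x => x = k) Z -> Z = 0) ->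
  (forall Y, V L k (fun x => x = j) Y -> Y = 0) ->
  (n j < n k)%N -> False.
Proof.
move=> npos HL hc hV0 hW0 hlt.
case: (HL) => hsu h0 hadd hsc hbr.
pose eps (Y : 'M[C]_(n k)) := epsilon (inhabits (bd_zero C n)) (fun A => L A /\ A k = Y).
have spec : forall Y, is_su Y -> L (eps Y) /\ eps Y k = Y.
  move=> Y hY; have [A hA] := hc k Y hY.
  exact: (epsilon_spec (inhabits (bd_zero C n)) (fun A => L A /\ A k = Y) (ex_intro _ A hA)).
have uniq : forall A A', L A -> L A' -> A k = A' k -> A j = A' j.
  move=> A A' hA hA' e.
  have hD : L (bd_add A (bd_scale (-1) A')) by apply: hadd => //; apply: hsc; rewrite ?rpredN1.
  have hv : V L j (fun x => x = k) (bd_add A (bd_scale (-1) A') j).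
    exists (bd_add A (bd_scale (-1) A')); split => // x ->.
    by rewrite /bd_add /bd_scale e scaleN1r subrr.
  by move/hV0: hv => /eqP; rewrite /bd_add /bd_scale scaleN1r subr_eq0 => /eqP.
pose phi (Y : 'M[C]_(n k)) : 'M[C]_(n j) := eps Y j.
apply: (@no_inj C (n k) (n j) phi (npos j) hlt).
- by move=> X hX; have [hA _] := spec X hX; exact: hsu.
- move=> a X Y ha hX hY.
  have hXY := suD ha hX hY.
  have [hA1 e1] := spec _ hXY; have [hA2 e2] := spec _ hX; have [hA3 e3] := spec _ hY.
  have hB : L (bd_add (bd_scale a (eps X)) (eps Y)) by apply: hadd => //; apply: hsc.
  rewrite /phi (uniq _ _ hA1 hB) // /bd_add /bd_scale e1 e2 e3 //.
- move=> Y hY h; have [hA e] := spec Y hY.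
  apply: hW0; exists (eps Y); split => // x ->; exact: h.
Qed.

Lemma pair_all (C : numClosedFieldType) r (n : 'I_r -> nat) (L : blockdiag C n -> Prop) j k :
  (forall j, (0 < n j)%N) -> injective n -> real_lie_subalg L -> weak_subspace_controllable L ->
  j != k -> forall Z, is_su Z -> V L j (fun x => x = k) Z.
Proof.
move=> npos ninj HL hc hjk.
have hIj := V_ideal j (fun x => x = k) HL hc.
have hIk := V_ideal k (fun x => x = j) HL hc.
case: (classic (exists Z, V L j (fun x => x = k) Z /\ Z != 0)) => [[Z [hZ nZ]]|nV].
  exact: su_simple hIj hZ nZ.
case: (classic (exists Y, V L k (fun x => x = j) Y /\ Y != 0)) => [[Y [hY nY]]|nW].
  move=> Z hZ; have [A [hA eA]] := hc j Z hZ.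
  have hsuk : is_su (A k) by case: HL => hsu *; exact: hsu.
  have [B [hB eB zB]] := su_simple hIk hY nY hsuk.
  case: HL => hsu h0 hadd hsc hbr.
  exists (bd_add A (bd_scale (-1) B)); split.
  - by apply: hadd => //; apply: hsc; rewrite ?rpredN1.
  - by rewrite /bd_add /bd_scale eA zB // scaler0 addr0.
  - by move=> x ->; rewrite /bd_add /bd_scale eB scaleN1r subrr.
have hV0 : forall Z, V L j (fun x => x = k) Z -> Z = 0.
  move=> Z hZ; apply/eqP; apply/negPn/negP => nZ; apply: nV; by exists Z.
have hW0 : forall Y, V L k (fun x => x = j) Y -> Y = 0.
  move=> Y hY; apply/eqP; apply/negPn/negP => nY; apply: nW; by exists Y.
have nn : n j != n k by apply: contra hjk => /eqP /ninj ->.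
case: (ltngtP (n j) (n k)) => h.
- by case: (graph_false npos HL hc hV0 hW0 h).
- by case: (graph_false npos HL hc hW0 hV0 h).
- by rewrite h eqxx in nn.
Qed.

Lemma noncomm (C : numClosedFieldType) m (a b : 'I_m) : a != b ->
  exists X Y : 'M[C]_m, [/\ is_su X, is_su Y & br X Y != 0].
Proof.
move=> hab; have hba : b != a by rewrite eq_sym.
exists (delta_mx a b - delta_mx b a), ('i *: (delta_mx a b + delta_mx b a)); split.
- apply: suI; first by rewrite adjD adjN !adj_delta opprB addrC.
  by rewrite linearB /= !tr_delta_neq // subrr.
- apply: suI; first by rewrite adjZ adjD !adj_delta conjCi scaleNr addrC.
  by rewrite mxtraceZ mxtraceD !tr_delta_neq // addr0 mulr0.
- have e : br (delta_mx a b - delta_mx b a) ('i *: (delta_mx a b + delta_mx b a)) =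
      (2 * 'i) *: (delta_mx a a - delta_mx b b :'M[C]_m).
    rewrite /br -scalemxAl -scalemxAr !(mulmxBl, mulmxDl, mulmxDr, mulmxBr, mulmxN, mulNmx).
    rewrite !mul_delta_mx_cond !eqxx ?(negbTE hab) ?(negbTE hba) !mulr1n !mulr0n.
    by apply/matrixP => x y; rewrite !mxE; ring.
  rewrite e; apply/eqP => /matrixP /(_ a a); rewrite !mxE !eqxx ?(negbTE hab) /= => /eqP.
  rewrite subr0 mulr1 mulf_eq0 pnatr_eq0 /= (negbTE (neq0Ci C)) //.
Qed.

Lemma su1_zero (C : numClosedFieldType) m (Z : 'M[C]_m) : (m <= 1)%N -> is_su Z -> Z = 0.
Proof.
move=> hm hZ; apply/matrixP => x y.
have exy : x = y by apply: ord_inj; have := ltn_ord x; have := ltn_ord y; lia.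
subst y; rewrite mxE; have := su_tr hZ; rewrite /mxtrace (bigD1 x) //= big1 ?addr0 //.
move=> i hi; case/eqP: hi; apply: ord_inj; have := ltn_ord x; have := ltn_ord i; lia.
Qed.

Lemma glue (C : numClosedFieldType) r (n : 'I_r -> nat) (L : blockdiag C n -> Prop) j :
  (forall j, (0 < n j)%N) -> injective n -> real_lie_subalg L -> weak_subspace_controllable L ->
  forall s : seq 'I_r, j \notin s -> forall Z, is_su Z -> V L j (fun x => x \in s) Z.
Proof.
move=> npos ninj HL hc; elim=> [|k s IH] hs Z hZ.
  by have [A [hA eA]] := hc j Z hZ; exists A; split => // x; rewrite in_nil.
move: hs; rewrite inE negb_or => /andP [hjk hjs].
have hI := V_ideal j (fun x => x \in k :: s) HL hc.
case: (leqP (n j) 1) => hn.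
  by rewrite (su1_zero hn hZ); case: hI.
have h0 := npos j.
have hab : (Ordinal h0) != (Ordinal hn) by [].
have [X [Y [sX sY nXY]]] := noncomm C hab.
have [A [hA eA zA]] := IH hjs X sX.
have [B [hB eB zB]] := pair_all npos ninj HL hc hjk sY.
apply: (su_simple hI _ nXY hZ).
case: HL => hsu hz hadd hsc hbr.
exists (bd_bracket A B); split; [exact: hbr | by rewrite /bd_bracket eA eB |].
move=> x; rewrite inE => /orP [/eqP -> | hx]; rewrite /bd_bracket.
  by rewrite zB // mul0mx mulmx0 subrr.
by rewrite zA // mul0mx mulmx0 subrr.
Qed.

Theorem lemma4p3 (C : numClosedFieldType) (r : nat) (n : 'I_r -> nat)
  (npos : forall j, (0 < n j)%N) (ndist : injective n)
  (L : blockdiag C n -> Prop)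
  (HL : real_lie_subalg L) (Hctrl : weak_subspace_controllable L) :
  forall A : blockdiag C n, L A <-> in_sum_su A.
Proof.
move=> A; split; first by case: HL => hsu *; exact: hsu.
move=> hA.
have Ej : forall j, exists E, [/\ L E, E j = A j & forall k, k != j -> E k = 0].
  move=> j.
  have hj : j \notin [seq x <- enum 'I_r | x != j] by rewrite mem_filter eqxx.
  have [E [hE eE zE]] := glue npos ndist HL Hctrl hj (hA j).
  exists E; split => // k hk; apply: zE; by rewrite mem_filter hk mem_enum.
case: (HL) => hsu hz hadd hsc hbr.
have acc : forall s : seq 'I_r, uniq s ->
    exists B, L B /\ forall x, B x = if x \in s then A x else 0.
  elim=> [|x0 s IH] /=.
    by move=> _; exists (bd_zero C n); split => // x.
  move=> /andP [hx0 us]; have [B [hB eB]] := IH us.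
  have [E [hE eE zE]] := Ej x0.
  exists (bd_add B E); split; first exact: hadd.
  move=> x; rewrite /bd_add inE; have [->|hne] := eqVneq x x0.
    by rewrite eB (negbTE hx0) eE add0r.
  by rewrite eB zE // addr0.
have [B [hB eB]] := acc _ (enum_uniq (pred_of_simpl predT)).
have -> : A = B.
  by apply: functional_extensionality_dep => x; rewrite eB mem_enum.
exact: hB.
Qed.
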